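(* In the SVAR(1) model with regime chain $\{I_n\}$ on $\{1,\dots,r\}$, for $i\in\{1,\dots,r\}$ and $n\ge1$ let $\Phi_n(i)=\mathbb{E}\big[\|A_n\cdots A_1\|\,\big|\,I_0=i\big]$, where $\|\cdot\|$ is a submultiplicative matrix norm. Then $\Phi_n(i)\to0$ as $n\to\infty$ for every $i$ if and only if there exist constants $C<\infty$ and $\gamma\in(0,1)$ such that $\Phi_n(i)\le C\gamma^n$ for all $n\ge1$ and all $i$.
   Context: SVAR(1) model: let $\{I_n\}$ be a Markov chain on the finite set $\mathcal{S}=\{1,\dots,r\}$. Given fixed real $p\times p$ matrices $B_1,\dots,B_r$ and fixed $p\times p$ matrices $\Sigma_1,\dots,\Sigma_r$, set $A_n=\sum_{i=1}^rB_i\mathbf{1}_{\{I_n=i\}}$ and $E_n=\sum_{i=1}^r\Sigma_i\varepsilon_{ni}\mathbf{1}_{\{I_n=i\}}$, where for each $i$ the sequence $(\varepsilon_{ni})_n$ is i.i.d. with mean zero and identity covariance matrix, the sequences $(\varepsilon_{n1})_n,\dots,(\varepsilon_{nr})_n$ are mutually independent, and $\{I_n\}$ is independent of all the $\varepsilon_{ni}$. The model is $X_n=A_nX_{n-1}+E_n$. *)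

(* Defs.v *)
From HB Require Import structures.
From mathcomp Require Import all_boot all_order all_algebra.
From mathcomp Require Import all_classical all_reals all_analysis.
Set Implicit Arguments. Unset Strict Implicit. Unset Printing Implicit Defensive.
Import Order.TTheory GRing.Theory Num.Theory.
Local Open Scope ring_scope.

Definition stochastic (R : realType) (r : nat) (P : 'M[R]_r) : Prop :=
  (forall i j, 0 <= P i j) /\ (forall i, \sum_(j < r) P i j = 1).

Definition submult_mxnorm (R : realType) (p : nat) (N : 'M[R]_p -> R) : Prop :=
  [/\ forall A, 0 <= N A,
      forall A, N A = 0 -> A = 0,
      forall (a : R) A, N (a *: A) = `|a| * N A,
      forall A B, N (A + B) <= N A + N B
    & forall A B, N (A *m B) <= N A * N B].

(* Probability that the chain started at i follows the path s = [i_1; ...; i_n]: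
   P(i,i_1) P(i_1,i_2) ... P(i_{n-1},i_n). *)
Fixpoint path_prob (R : realType) (r : nat) (P : 'M[R]_r) (i : 'I_r)
    (s : seq 'I_r) : R :=
  if s is j :: s' then P i j * path_prob P j s' else 1.

(* For s = [i_1; ...; i_n], path_mx B s = B_{i_n} *m ... *m B_{i_1}
   (= A_n ... A_1 on the event I_1 = i_1, ..., I_n = i_n). *)
Fixpoint path_mx (R : realType) (r p : nat) (B : 'I_r -> 'M[R]_p)
    (s : seq 'I_r) : 'M[R]_p :=
  if s is j :: s' then path_mx B s' *m B j else 1%:M.

(* Phi_n(i) = E[ ||A_n ... A_1|| | I_0 = i ], for the Markov chain with
   transition matrix P: the expectation of a function of (I_1,...,I_n)
   given I_0 = i, written as the sum over all paths. *)
Definition Phi (R : realType) (r p : nat) (P : 'M[R]_r) (B : 'I_r -> 'M[R]_p)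
    (N : 'M[R]_p -> R) (n : nat) (i : 'I_r) : R :=
  \sum_(s : n.-tuple 'I_r) path_prob P i s * N (path_mx B s).

(* Main.v *)
Require Import Defs.
From HB Require Import structures.
From mathcomp Require Import all_boot all_order all_algebra.
From mathcomp Require Import all_classical all_reals all_analysis.
From mathcomp Require Import lra.
Import Order.TTheory GRing.Theory Num.Theory numFieldNormedType.Exports.
Local Open Scope classical_set_scope.
Local Open Scope ring_scope.

Section S.
Variables (R : realType) (r p : nat) (P : 'M[R]_r) (B : 'I_r -> 'M[R]_p) (N : 'M[R]_p -> R).

Definition Psi n i X := \sum_(s : n.-tuple 'I_r) path_prob P i s * N (path_mx B s *m X).

Lemma Psi0 i X : Psi 0 i X = N X.
Proof.
rewrite /Psi (big_pred1 [tuple]) /=; last by move=> t /=; apply/esym/eqP; apply: val_inj; case: t => [[]].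
by rewrite mul1r mul1mx.
Qed.

Lemma PsiS n i X : Psi n.+1 i X = \sum_j P i j * Psi n j (B j *m X).
Proof.
rewrite /Psi (reindex (fun q : 'I_r * n.-tuple 'I_r => [tuple of q.1 :: q.2])) /=.
  rewrite -(pair_big xpredT xpredT (fun a (b : n.-tuple 'I_r) =>
     path_prob P i (a :: b) * N (path_mx B (a :: b) *m X))) /=.
  apply: eq_bigr => j _; rewrite mulr_sumr; apply: eq_bigr => s _.
  by rewrite mulrA mulmxA.
exists (fun t : n.+1.-tuple 'I_r => (thead t, [tuple of behead t])).
  by move=> [a b] _ /=; congr pair; apply: val_inj.
by move=> t _; rewrite [RHS]tuple_eta; apply: val_inj.
Qed.

Lemma PhiE n i : Phi P B N n i = Psi n i 1%:M.
Proof. by rewrite /Phi /Psi; apply: eq_bigr => s _; rewrite mulmx1. Qed.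

Hypothesis (HP : stochastic P) (HN : submult_mxnorm N).

Lemma Pge0 i j : 0 <= P i j. Proof. by case: HP. Qed.
Lemma Nge0 A : 0 <= N A. Proof. by case: HN. Qed.
Lemma NM A C : N (A *m C) <= N A * N C. Proof. by case: HN. Qed.

Lemma path_prob_ge0 i s : 0 <= path_prob P i s.
Proof. elim: s i => [|j s IH] i /=; first exact: ler01. by rewrite mulr_ge0 ?Pge0. Qed.

Lemma Psi_ge0 n i X : 0 <= Psi n i X.
Proof. by apply: sumr_ge0 => s _; rewrite mulr_ge0 ?path_prob_ge0 ?Nge0. Qed.

Lemma Phi_ge0 n i : 0 <= Phi P B N n i.
Proof. by rewrite PhiE Psi_ge0. Qed.

Lemma Psi_le n i X : Psi n i X <= Phi P B N n i * N X.
Proof.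
rewrite /Psi /Phi mulr_suml; apply: ler_sum => s _.
by rewrite -mulrA ler_wpM2l ?path_prob_ge0 ?NM.
Qed.

Definition S n := \sum_j Phi P B N n j.

Lemma S_ge0 n : 0 <= S n. Proof. by apply: sumr_ge0 => j _; apply: Phi_ge0. Qed.

Lemma Phi_le_S n i : Phi P B N n i <= S n.
Proof.
rewrite /S (bigD1 i) //= lerDl; by apply: sumr_ge0 => j _; apply: Phi_ge0.
Qed.

Lemma Psi_split m n i X : Psi (m + n) i X <= Psi m i X * S n.
Proof.
elim: m i X => [|m IH] i X.
  rewrite add0n Psi0 mulrC; apply: le_trans (Psi_le _ _ _) _.
  by rewrite ler_wpM2r ?Nge0 ?Phi_le_S.
rewrite addSn !PsiS mulr_suml; apply: ler_sum => j _.
by rewrite -mulrA ler_wpM2l ?Pge0 ?IH.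
Qed.

Lemma S_sub m n : S (m + n) <= S m * S n.
Proof.
rewrite /S mulr_suml; apply: ler_sum => i _.
by rewrite !PhiE Psi_split.
Qed.

End S.

Lemma bernoulli (R : realType) (x : R) (k : nat) :
  0 <= x -> x <= 1 -> 1 - k%:R * x <= (1 - x) ^+ k.
Proof.
move=> x0 x1; elim: k => [|k IH]; first by rewrite mul0r subr0 expr0.
rewrite exprSr; have h1 : 0 <= 1 - x by rewrite subr_ge0.
apply: le_trans (_ : (1 - k%:R * x) * (1 - x) <= _); last by rewrite ler_wpM2r.
have k0 : 0 <= k%:R :> R by [].
rewrite -natr1; nra.
Qed.

Theorem proposition2 (R : realType) (r p : nat) (P : 'M[R]_r)
    (B : 'I_r -> 'M[R]_p) (N : 'M[R]_p -> R) :
  stochastic P -> submult_mxnorm N ->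
  ((forall i : 'I_r, (fun n => Phi P B N n i) @ \oo --> (0 : R)) <->
   (exists (C gamma : R), 0 < gamma < 1 /\
      forall (n : nat) (i : 'I_r), (1 <= n)%N -> Phi P B N n i <= C * gamma ^+ n)).
Proof.
move=> HP HN.
have Sge0 := @S_ge0 R r p P B N HP HN.
have Phige0 := @Phi_ge0 R r p P B N HP HN.
have PhileS := @Phi_le_S R r p P B N HP HN.
have Ssub := @S_sub R r p P B N HP HN.
split.
  move=> Hc.
  have HS : (@S R r p P B N) @ \oo --> (0 : R).
    have := @cvg_big R _ +%R 0 xpredT add_continuous nat \oo (enum 'I_r)
       (fun j n => Phi P B N n j) (fun _ => 0) _ (fun j _ => Hc j).
    rewrite big1 // => H; have {}H := H ltac:(typeclasses eauto); move: H. suff -> : @S R r p P B N = fun n => \sum_(j <- enum 'I_r) Phi P B N n j by [].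
    by apply: funext => n; rewrite /S big_enum.
  have h2 : 0 < 1/2 :> R by [].
  have [N0 _ HN0] := cvgr0_norm_lt _ HS _ h2.
  set K := N0.+1.
  have HK : @S R r p P B N K <= 1/2.
    have := HN0 K (leqnSn _); rewrite /= ger0_norm ?Sge0 //; exact: ltW.
  have K0 : (0 < K)%N by [].
  have K0r : 0 < K%:R :> R by rewrite ltr0n.
  set x : R := (K.*2)%:R^-1.
  have x0 : 0 < x by rewrite invr_gt0 ltr0n double_gt0.
  have Kx : K%:R * x = 1/2.
    by rewrite /x -muln2 natrM invfM mulrA divff ?mul1r // gt_eqF.
  have x1 : x <= 1/2.
    rewrite -Kx -{1}(mul1r x); apply: ler_wpM2r; [exact: ltW | by rewrite ler1n].
  set g : R := 1 - x.
  have g0 : 0 < g by rewrite /g; lra.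
  have g1 : g < 1 by rewrite /g; lra.
  have gK : 1/2 <= g ^+ K.
    have x1' : x <= 1 by lra. have := @bernoulli R x K (ltW x0) x1'.
    by rewrite Kx; lra.
  have Hq : forall q s, @S R r p P B N (q * K + s) <= g ^+ (q * K) * @S R r p P B N s.
    elim=> [|q IH] s; first by rewrite mul0n add0n expr0 mul1r.
    rewrite mulSn -addnA; apply: le_trans (Ssub _ _) _.
    rewrite exprD -mulrA; apply: ler_pM => //; first exact: le_trans HK gK.
  set D := \sum_(s < K) @S R r p P B N s.
  have D0 : 0 <= D by apply: sumr_ge0.
  have gK0 : 0 < g ^+ K by rewrite exprn_gt0.
  exists (D / g ^+ K), g; split; first by rewrite g0 g1.
  move=> n i _.
  have En : (n = n %/ K * K + n %% K)%N := div.divn_eq n K.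
  have sK : (n %% K < K)%N by rewrite ltn_pmod.
  set q := (n %/ K)%N in En *; set s := (n %% K)%N in En sK *.
  apply: le_trans (PhileS n i) _; rewrite En.
  apply: le_trans (Hq q s) _.
  set a := g ^+ (q * K).
  have a0 : 0 <= a by rewrite exprn_ge0 // ltW.
  have SsD : @S R r p P B N s <= D.
    rewrite /D (bigD1 (Ordinal sK)) //= lerDl; by apply: sumr_ge0.
  apply: le_trans (_ : a * D <= _); first by rewrite ler_wpM2l.
  apply: (le_trans (_ : _ <= D / g ^+ K * (a * g ^+ K))).
    by rewrite mulrCA divfK ?gt_eqF.
  have c0 : 0 <= D / g ^+ K := divr_ge0 D0 (ltW gK0).
  rewrite exprD -/a; apply: (ler_wpM2l c0); apply: (ler_wpM2l a0).
  apply: ler_wiXn2l; rewrite ?ltW //; exact: ltnW.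
move=> [C [g [/andP[g0 g1] Hb]]] i.
apply: (@squeeze_cvgr _ _ _ _ (fun _ => 0) (fun n => C * g ^+ n)).
- exists 1%N => // n /= n1; by rewrite Phige0 // Hb.
- exact: cvg_cst.
- have := cvgM (cvg_cst C) (cvg_expr (_ : `|g| < 1)); rewrite mulr0; apply.
  by rewrite ger0_norm ?ltW.
Qed.
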